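(* For every grounding tree $\Gamma[\Delta]\blacktriangleright A$ of size greater than $1$, one can derive from it, using only $\triangleright$ elimination rules, all the immediate grounding claims that compose it, and one can derive $\Gamma[\Delta]\blacktriangleright A$ from these immediate grounding claims using only $\triangleright$ introduction rules.
   Context: Language: grounding trees are formulae $\Gamma[\Delta]\blacktriangleright A$ where $\Gamma,\Delta$ are finite lists ($\Delta$ possibly empty) whose elements are either formulae or expressions $(\Theta[\Sigma])\triangleright B$, with $B$ a formula and $\Theta,\Sigma$ again such lists (nesting arbitrarily). An immediate grounding claim is such a formula in which no element of $\Gamma,\Delta$ has the form $(\cdot)\triangleright\cdot$. The immediate grounding claims composing a grounding tree $\Gamma[\Delta]\blacktriangleright A$ are defined recursively: if the elements of $\Gamma,\Delta$ of the form $(\cdot)\triangleright\cdot$ are $(\Gamma_i[\Delta_i])\triangleright A_i$ ($1\le i\le n$), they are the immediate grounding claim obtained by replacing each $(\Gamma_i[\Delta_i])\triangleright A_i$ with $A_i$, together with the immediate grounding claims composing each $\Gamma_i[\Delta_i]\blacktriangleright A_i$. Size: an immediate grounding claim has size $1$; if the elements of $\Gamma$ and $\Delta$ with outermost operator $\triangleright$ are $(\Gamma_1[\Delta_1])\triangleright A_1,\dots,(\Gamma_n[\Delta_n])\triangleright A_n$, then $|\Gamma[\Delta]\blacktriangleright A| = |\Gamma_1[\Delta_1]\blacktriangleright A_1|+\dots+|\Gamma_n[\Delta_n]\blacktriangleright A_n|+1$. Rules for $\triangleright$: Introductions: from $\Delta[\Theta]\blacktriangleright A$ and $\Gamma_1,A,\Gamma_2[\Xi]\blacktriangleright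 B$ infer $\Gamma_1,(\Delta[\Theta])\triangleright A,\Gamma_2[\Xi]\blacktriangleright B$; from $\Delta[\Theta]\blacktriangleright C$ and $\Gamma[\Xi_1,C,\Xi_2]\blacktriangleright B$ infer $\Gamma[\Xi_1,(\Delta[\Theta])\triangleright C,\Xi_2]\blacktriangleright B$. Eliminations: from $\Gamma_1,(\Delta[\Theta])\triangleright A,\Gamma_2[\Xi]\blacktriangleright B$ infer $\Delta[\Theta]\blacktriangleright A$ and $\Gamma_1,A,\Gamma_2[\Xi]\blacktriangleright B$; from $\Gamma[\Xi_1,(\Delta[\Theta])\triangleright C,\Xi_2]\blacktriangleright B$ infer $\Delta[\Theta]\blacktriangleright C$ and $\Gamma[\Xi_1,C,\Xi_2]\blacktriangleright B$. *)

(* Defs.v *)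
From Stdlib Require Import List Arith.
Import ListNotations.
Set Implicit Arguments.

Section Grounding.
Variable F : Type. (* the type of formulae of the underlying language *)

(* An element of a list Γ or Δ: either a formula, or (Θ[Σ]) ▷ B. *)
Inductive item : Type :=
| Fm  : F -> item
| Tri : list item -> list item -> F -> item.

(* A grounding tree Γ[Δ] ▶ A. *)
Inductive gtree : Type := GT : list item -> list item -> F -> gtree.

Definition strip (i : item) : item :=
  match i with Fm A => Fm A | Tri _ _ B => Fm B end.

Definition is_formula (i : item) : Prop :=
  match i with Fm _ => True | Tri _ _ _ => False end.

Definition immediate (t : gtree) : Prop :=
  match t with GT G D _ => Forall is_formula G /\ Forall is_formula D end.

Fixpoint item_comps (i : item) : list gtree :=
  match i with
  | Fm _ => []
  | Tri G D B =>
      GT (map strip G) (map strip D) B ::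
        ((fix lc (l : list item) : list gtree :=
            match l with [] => [] | x :: l' => item_comps x ++ lc l' end) G
         ++
         (fix lc (l : list item) : list gtree :=
            match l with [] => [] | x :: l' => item_comps x ++ lc l' end) D)
  end.

Definition components (t : gtree) : list gtree :=
  match t with GT G D A => item_comps (Tri G D A) end.

Fixpoint item_size (i : item) : nat :=
  match i with
  | Fm _ => 0
  | Tri G D B =>
      1 + (fix ls (l : list item) : nat :=
             match l with [] => 0 | x :: l' => item_size x + ls l' end) G
        + (fix ls (l : list item) : nat :=
             match l with [] => 0 | x :: l' => item_size x + ls l' end) D
  end.

Definition gsize (t : gtree) : nat :=
  match t with GT G D A => item_size (Tri G D A) end.

Inductive der_elim (H : gtree -> Prop) : gtree -> Prop :=
| de_hyp : forall t, H t -> der_elim H t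
| de_elimL1 : forall G1 G2 D T A X B,
    der_elim H (GT (G1 ++ Tri D T A :: G2) X B) -> der_elim H (GT D T A)
| de_elimL2 : forall G1 G2 D T A X B,
    der_elim H (GT (G1 ++ Tri D T A :: G2) X B) -> der_elim H (GT (G1 ++ Fm A :: G2) X B)
| de_elimR1 : forall G X1 X2 D T C B,
    der_elim H (GT G (X1 ++ Tri D T C :: X2) B) -> der_elim H (GT D T C)
| de_elimR2 : forall G X1 X2 D T C B,
    der_elim H (GT G (X1 ++ Tri D T C :: X2) B) -> der_elim H (GT G (X1 ++ Fm C :: X2) B).

Inductive der_intro (H : gtree -> Prop) : gtree -> Prop :=
| di_hyp : forall t, H t -> der_intro H t
| di_introL : forall G1 G2 D T A X B,
    der_intro H (GT D T A) -> der_intro H (GT (G1 ++ Fm A :: G2) X B) ->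
    der_intro H (GT (G1 ++ Tri D T A :: G2) X B)
| di_introR : forall G X1 X2 D T C B,
    der_intro H (GT D T C) -> der_intro H (GT G (X1 ++ Fm C :: X2) B) ->
    der_intro H (GT G (X1 ++ Tri D T C :: X2) B).

End Grounding.

(* Main.v *)
Require Import Defs.
From Stdlib Require Import List Arith.
Import ListNotations.

Section S.
Variable F : Type.

Fixpoint lcomps (l : list (item F)) : list (gtree F) :=
  match l with [] => [] | x :: l' => item_comps x ++ lcomps l' end.

Lemma comps_eq G D A : item_comps (Tri G D A) = GT (map (@strip F) G) (map (@strip F) D) A :: (lcomps G ++ lcomps D).
Proof. reflexivity. Qed.

Lemma lcomps_In c l : In c (lcomps l) -> exists x, In x l /\ In c (item_comps x).
Proof.
  induction l as [|x l IH]; simpl; [tauto|].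
  intros Hc; apply in_app_or in Hc as [Hc|Hc].
  - exists x; auto.
  - destruct (IH Hc) as [y [Hy1 Hy2]]; exists y; auto.
Qed.

Lemma lcomps_In2 c x l : In x l -> In c (item_comps x) -> In c (lcomps l).
Proof.
  induction l as [|y l IH]; simpl; [tauto|].
  intros [<-|Hx] Hc; apply in_or_app; auto.
Qed.

Fixpoint item_ind' (P : item F -> Prop) (hf : forall a, P (Fm a))
  (ht : forall G D A, Forall P G -> Forall P D -> P (Tri G D A)) (i : item F) : P i :=
  match i with
  | Fm a => hf a
  | Tri G D A =>
      ht G D A
        ((fix f (l : list (item F)) : Forall P l :=
            match l with [] => Forall_nil _ | x :: l' => Forall_cons _ (item_ind' P hf ht x) (f l') end) G)
        ((fix f (l : list (item F)) : Forall P l :=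
            match l with [] => Forall_nil _ | x :: l' => Forall_cons _ (item_ind' P hf ht x) (f l') end) D)
  end.

Lemma der_elim_trans (H1 H2 : gtree F -> Prop) c :
  der_elim H1 c -> (forall h, H1 h -> der_elim H2 h) -> der_elim H2 c.
Proof.
  intros Hd Hh; induction Hd.
  - auto.
  - eapply de_elimL1; eauto.
  - eapply de_elimL2; eauto.
  - eapply de_elimR1; eauto.
  - eapply de_elimR2; eauto.
Qed.

Lemma elim_left (H : gtree F -> Prop) X B : forall L Pre,
  der_elim H (GT (Pre ++ L) X B) ->
  der_elim H (GT (Pre ++ map (@strip F) L) X B) /\
  (forall D' T' A', In (Tri D' T' A') L -> der_elim H (GT D' T' A')).
Proof.
  induction L as [|x L IH]; intros Pre Hd; simpl.
  - split; [exact Hd| tauto].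
  - destruct x as [a|D0 T0 A0].
    + destruct (IH (Pre ++ [Fm a])) as [H1 H2].
      { rewrite <- app_assoc; exact Hd. }
      rewrite <- app_assoc in H1; split; [exact H1|].
      intros D' T' A' [E|E]; [discriminate|auto].
    + assert (Hs : der_elim H (GT D0 T0 A0)) by (eapply de_elimL1; exact Hd).
      assert (Hd2 : der_elim H (GT (Pre ++ Fm A0 :: L) X B)) by (eapply de_elimL2; exact Hd).
      destruct (IH (Pre ++ [Fm A0])) as [H1 H2].
      { rewrite <- app_assoc; exact Hd2. }
      rewrite <- app_assoc in H1; split; [exact H1|].
      intros D' T' A' [E|E]; [injection E; intros; subst; auto|auto].
Qed.

Lemma elim_right (H : gtree F -> Prop) G B : forall L Pre,
  der_elim H (GT G (Pre ++ L) B) ->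
  der_elim H (GT G (Pre ++ map (@strip F) L) B) /\
  (forall D' T' A', In (Tri D' T' A') L -> der_elim H (GT D' T' A')).
Proof.
  induction L as [|x L IH]; intros Pre Hd; simpl.
  - split; [exact Hd| tauto].
  - destruct x as [a|D0 T0 A0].
    + destruct (IH (Pre ++ [Fm a])) as [H1 H2].
      { rewrite <- app_assoc; exact Hd. }
      rewrite <- app_assoc in H1; split; [exact H1|].
      intros D' T' A' [E|E]; [discriminate|auto].
    + assert (Hs : der_elim H (GT D0 T0 A0)) by (eapply de_elimR1; exact Hd).
      assert (Hd2 : der_elim H (GT G (Pre ++ Fm A0 :: L) B)) by (eapply de_elimR2; exact Hd).
      destruct (IH (Pre ++ [Fm A0])) as [H1 H2].
      { rewrite <- app_assoc; exact Hd2. }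
      rewrite <- app_assoc in H1; split; [exact H1|].
      intros D' T' A' [E|E]; [injection E; intros; subst; auto|auto].
Qed.

Lemma elim_all : forall i, forall (H : gtree F -> Prop) G D A, i = Tri G D A ->
  der_elim H (GT G D A) -> forall c, In c (item_comps i) -> der_elim H c.
Proof.
  intro i; induction i as [a|G0 D0 A0 IG ID] using item_ind'.
  - intros; discriminate.
  - intros H G D A E Hd c Hc.
    injection E; intros; subst; clear E.
    rewrite comps_eq in Hc.
    destruct (elim_right H G A D [] Hd) as [H1 H2].
    destruct (elim_left H (map (@strip F) D) A G [] H1) as [H3 H4].
    destruct Hc as [<-|Hc]; [exact H3|].
    apply in_app_or in Hc as [Hc|Hc]; apply lcomps_In in Hc as [x [Hx Hcx]].
    + rewrite Forall_forall in IG. destruct x as [a|Dx Tx Ax]; [contradiction|].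
      eapply IG; eauto.
    + rewrite Forall_forall in ID. destruct x as [a|Dx Tx Ax]; [contradiction|].
      eapply ID; eauto.
Qed.

Lemma intro_left (H : gtree F -> Prop) X B : forall L Pre,
  (forall D' T' A', In (Tri D' T' A') L -> der_intro H (GT D' T' A')) ->
  der_intro H (GT (Pre ++ map (@strip F) L) X B) ->
  der_intro H (GT (Pre ++ L) X B).
Proof.
  induction L as [|x L IH]; intros Pre Hs Hd; simpl in *; [exact Hd|].
  destruct x as [a|D0 T0 A0].
  - specialize (IH (Pre ++ [Fm a])). rewrite <- !app_assoc in IH. simpl in IH. apply IH; auto.
  - apply di_introL; [auto|].
    specialize (IH (Pre ++ [Fm A0])). rewrite <- !app_assoc in IH. simpl in IH. apply IH; auto.
Qed.

Lemma intro_right (H : gtree F -> Prop) G B : forall L Pre,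
  (forall D' T' A', In (Tri D' T' A') L -> der_intro H (GT D' T' A')) ->
  der_intro H (GT G (Pre ++ map (@strip F) L) B) ->
  der_intro H (GT G (Pre ++ L) B).
Proof.
  induction L as [|x L IH]; intros Pre Hs Hd; simpl in *; [exact Hd|].
  destruct x as [a|D0 T0 A0].
  - specialize (IH (Pre ++ [Fm a])). rewrite <- !app_assoc in IH. simpl in IH. apply IH; auto.
  - apply di_introR; [auto|].
    specialize (IH (Pre ++ [Fm A0])). rewrite <- !app_assoc in IH. simpl in IH. apply IH; auto.
Qed.

Lemma intro_all : forall i, forall (H : gtree F -> Prop) G D A, i = Tri G D A ->
  (forall c, In c (item_comps i) -> H c) -> der_intro H (GT G D A).
Proof.
  intro i; induction i as [a|G0 D0 A0 IG ID] using item_ind'.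
  - intros; discriminate.
  - intros H G D A E Hc.
    injection E; intros; subst; clear E.
    rewrite comps_eq in Hc.
    apply (intro_left H D A G []).
    + intros D' T' A' Hin. rewrite Forall_forall in IG.
      eapply IG; [exact Hin|reflexivity|].
      intros c Hc'. apply Hc. right. apply in_or_app. left. eapply lcomps_In2; eauto.
    + apply (intro_right H (map (@strip F) G) A D []).
      * intros D' T' A' Hin. rewrite Forall_forall in ID.
        eapply ID; [exact Hin|reflexivity|].
        intros c Hc'. apply Hc. right. apply in_or_app. right. eapply lcomps_In2; eauto.
      * apply di_hyp. apply Hc. left. reflexivity.
Qed.

End S.

Theorem mainTheorem5 (F : Type) (t : gtree F) :
  1 < gsize t ->
  (forall c, In c (components t) -> der_elim (fun s => s = t) c) /\
  der_intro (fun c => In c (components t)) t.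
Proof.
  intros _. destruct t as [G D A]. split.
  - intros c Hc. eapply elim_all; [reflexivity| |exact Hc]. apply de_hyp; reflexivity.
  - eapply intro_all; [reflexivity|]. auto.
Qed.
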